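(* Let $n\ge1$, $C>0$ and $D<0$ be integers. Then there is a one-to-one correspondence between the set of integers $m$ with $0\le m<2nC$ and $m^2\equiv D\pmod{4nC}$, and the set of $\Gamma_0(n)$-orbits in $\mathcal{Q}_n(C,D)$.
   Context: $\mathcal{Q}_n(C,D)$ is the set of triples $(Q;r,t)$ where $Q(x,y)=n\alpha x^2+\beta xy+\gamma y^2$ with $\alpha,\beta,\gamma\in\mathbb{Z}$, $\alpha,\gamma>0$, discriminant $\beta^2-4n\alpha\gamma=D$, and $r,t$ are integers with $n\mid t$, $\gcd(r,t)=1$ and $Q(r,t)=nC$. $\Gamma_0(n)=\{\left(\begin{smallmatrix}a&b\\c&d\end{smallmatrix}\right)\in\mathrm{SL}_2(\mathbb{Z}): n\mid c\}$ acts on $\mathcal{Q}_n(C,D)$ by sending $(Q;r,t)$ to $(Q';dr-bt,-cr+at)$ where $Q'(x,y)=Q(ax+by,cx+dy)$. *)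

(* Defs.v *)
From Stdlib Require Import ZArith.
Open Scope Z_scope.

(* An element (Q; r, t) of Q_n(C,D) is encoded as (alpha, beta, gamma, r, t),
   with Q(x,y) = n*alpha*x^2 + beta*x*y + gamma*y^2. *)
Definition Qelt : Type := (Z * Z * Z * Z * Z)%type.

Definition Qval (n alpha beta gamma x y : Z) : Z :=
  n * alpha * x ^ 2 + beta * x * y + gamma * y ^ 2.

Definition inQn (n C D : Z) (p : Qelt) : Prop :=
  let '(alpha, beta, gamma, r, t) := p in
  0 < alpha /\ 0 < gamma /\
  beta ^ 2 - 4 * n * alpha * gamma = D /\
  (n | t) /\ Z.gcd r t = 1 /\
  Qval n alpha beta gamma r t = n * C.

Definition inGamma0 (n a b c d : Z) : Prop := a * d - b * c = 1 /\ (n | c).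

Definition act_rel (n a b c d : Z) (p q : Qelt) : Prop :=
  let '(al, be, ga, r, t) := p in
  let '(al', be', ga', r', t') := q in
  (forall x y : Z, Qval n al' be' ga' x y = Qval n al be ga (a * x + b * y) (c * x + d * y)) /\
  r' = d * r - b * t /\ t' = - c * r + a * t.

Definition same_orbit (n : Z) (p q : Qelt) : Prop :=
  exists a b c d : Z, inGamma0 n a b c d /\ act_rel n a b c d p q.

(* Main.v *)
Require Import Defs.
From Stdlib Require Import ZArith Znumtheory ClassicalEpsilon Lia.
Open Scope Z_scope.

Definition F (A B G x y : Z) : Z := A * x ^ 2 + B * x * y + G * y ^ 2.

Definition Bc (A B G r t b d : Z) : Z :=
  F A B G (r + b) (t + d) - F A B G r t - F A B G b d.

Definition bez (r t : Z) : Z * Z :=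
  epsilon (inhabits (0, 0)) (fun bd => r * snd bd - fst bd * t = 1).

Definition fq (n C : Z) (p : Qelt) : Z :=
  let '(al, be, ga, r, t) := p in
  (Bc (n * al) be ga r t (fst (bez r t)) (snd (bez r t))) mod (2 * n * C).

Lemma bez_spec r t : Z.gcd r t = 1 -> r * snd (bez r t) - fst (bez r t) * t = 1.
Proof.
  intro H. unfold bez. apply epsilon_spec.
  pose proof (Zis_gcd_bezout _ _ _ (Zgcd_is_gcd r t)) as Hb. rewrite H in Hb.
  destruct Hb as [u v Huv]. exists (-v, u). simpl. lia.
Qed.

Lemma compose A B G r t b d X Y :
  F A B G (r * X + b * Y) (t * X + d * Y) =
  F (F A B G r t) (Bc A B G r t b d) (F A B G b d) X Y.
Proof. unfold Bc, F. ring. Qed.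

Lemma inv A B G r t b d x y : r * d - b * t = 1 ->
  F A B G x y = F (F A B G r t) (Bc A B G r t b d) (F A B G b d)
                  (d * x - b * y) (- t * x + r * y).
Proof.
  intro H. rewrite <- compose.
  replace (r * (d * x - b * y) + b * (- t * x + r * y)) with ((r*d - b*t) * x) by ring.
  replace (t * (d * x - b * y) + d * (- t * x + r * y)) with ((r*d - b*t) * y) by ring.
  rewrite H. f_equal; ring.
Qed.

Lemma disc A B G r t b d :
  (Bc A B G r t b d) ^ 2 - 4 * F A B G r t * F A B G b d =
  (r * d - b * t) ^ 2 * (B ^ 2 - 4 * A * G).
Proof. unfold Bc, F. ring. Qed.

Lemma Bc_shift A B G r t b d b' d' : r * d - b * t = 1 -> r * d' - b' * t = 1 ->
  Bc A B G r t b' d' = Bc A B G r t b d + 2 * (d * b' - b * d') * F A B G r t.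
Proof.
  intros H1 H2. set (k := d * b' - b * d').
  assert (Hb : b' = b + k * r).
  { transitivity (b' * (r * d - b * t) - b * (r * d' - b' * t) + b).
    - rewrite H1, H2; ring.
    - unfold k; ring. }
  assert (Hd : d' = d + k * t).
  { transitivity (d' * (r * d - b * t) - d * (r * d' - b' * t) + d).
    - rewrite H1, H2; ring.
    - unfold k; ring. }
  rewrite Hb, Hd. unfold Bc, F. ring.
Qed.

Lemma fq_any n C al be ga r t b d :
  1 <= n -> 0 < C ->
  inQn n C (be ^ 2 - 4 * n * al * ga) (al, be, ga, r, t) -> r * d - b * t = 1 ->
  fq n C (al, be, ga, r, t) = (Bc (n * al) be ga r t b d) mod (2 * n * C).
Proof.
  intros hn hC Hin Hd. hnf in Hin. destruct Hin as (_ & _ & _ & _ & Hg & HQ).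
  pose proof (bez_spec r t Hg) as Hs. unfold fq.
  rewrite (Bc_shift _ _ _ _ _ b d _ _ Hd Hs).
  change (F (n * al) be ga r t) with (Qval n al be ga r t). rewrite HQ.
  replace (2 * (d * fst (bez r t) - b * snd (bez r t)) * (n * C))
    with ((d * fst (bez r t) - b * snd (bez r t)) * (2 * n * C)) by ring.
  apply Z_mod_plus_full.
Qed.

Lemma inQn_D n C D p : inQn n C D p ->
  let '(al, be, ga, r, t) := p in D = be ^ 2 - 4 * n * al * ga.
Proof. destruct p as [[[[al be] ga] r] t]. simpl. intros (_ & _ & H & _). lia. Qed.

Theorem lemma5 (n C D : Z) (hn : 1 <= n) (hC : 0 < C) (hD : D < 0) :
  exists f : Qelt -> Z,
    (forall p, inQn n C D p ->
        0 <= f p < 2 * n * C /\ (4 * n * C | f p ^ 2 - D)) /\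
    (forall m, 0 <= m < 2 * n * C -> (4 * n * C | m ^ 2 - D) ->
        exists p, inQn n C D p /\ f p = m) /\
    (forall p q, inQn n C D p -> inQn n C D q ->
        (f p = f q <-> same_orbit n p q)).
Proof.
  assert (HM : 2 * n * C <> 0) by nia.
  exists (fq n C). split; [|split].
  - intros [[[[al be] ga] r] t] Hin.
    pose proof Hin as Hin'. hnf in Hin'.
    destruct Hin' as (_ & _ & HD & _ & Hg & HQ).
    pose proof (bez_spec r t Hg) as Hs.
    set (b := fst (bez r t)) in *. set (d := snd (bez r t)) in *.
    pose proof (disc (n * al) be ga r t b d) as Hdi.
    change (F (n * al) be ga r t) with (Qval n al be ga r t) in Hdi.
    rewrite HQ, Hs in Hdi.
    unfold fq. fold b d. set (B0 := Bc (n * al) be ga r t b d) in *.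
    set (G0 := F (n * al) be ga b d) in *.
    split. { apply Z.mod_pos_bound. nia. }
    pose proof (Z.div_mod B0 (2 * n * C) HM) as Hdm.
    set (q := B0 / (2 * n * C)) in *. set (m := B0 mod (2 * n * C)) in *.
    exists (G0 - q * B0 + n * C * q ^ 2).
    assert (Hm : m = B0 - 2 * n * C * q) by lia. rewrite Hm.
    replace D with (B0 ^ 2 - 4 * (n * C) * G0) by (rewrite <- HD, Hdi; ring). ring.
  - intros m Hm [g Hg].
    assert (Hg0 : 0 < g).
    { assert (0 <= m ^ 2) by (rewrite Z.pow_2_r; apply Z.square_nonneg).
      assert (0 < 4 * n * C) by nia.
      destruct (Z.lt_ge_cases 0 g); [lia|]. nia. }
    exists (C, m, g, 1, 0). split.
    + hnf. split; [lia|]. split; [lia|]. split; [lia|].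
      split; [apply Z.divide_0_r|]. split; [reflexivity|]. unfold Qval. ring.
    + assert (Hin : inQn n C (m ^ 2 - 4 * n * C * g) (C, m, g, 1, 0)).
      { hnf. split; [lia|]. split; [lia|]. split; [reflexivity|].
        split; [apply Z.divide_0_r|]. split; [reflexivity|]. unfold Qval. ring. }
      rewrite (fq_any n C C m g 1 0 0 1 hn hC Hin) by ring.
      replace (Bc (n * C) m g 1 0 0 1) with m by (unfold Bc, F; ring).
      apply Z.mod_small. lia.
  - intros p q Hp Hq.
    pose proof (inQn_D _ _ _ _ Hp) as HDp. pose proof (inQn_D _ _ _ _ Hq) as HDq.
    destruct p as [[[[alp bep] gap] rp] tp].
    destruct q as [[[[alq beq] gaq] rq] tq].
    pose proof Hp as Hp'. pose proof Hq as Hq'. hnf in Hp', Hq'.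
    destruct Hp' as (Hap & Hgp & HDp' & Htp & Hggp & HQp).
    destruct Hq' as (Haq & Hgq & HDq' & Htq & Hggq & HQq).
    rewrite HDp in Hp. rewrite HDq in Hq.
    pose proof (bez_spec rq tq Hggq) as Hsq.
    set (bq := fst (bez rq tq)) in *. set (dq := snd (bez rq tq)) in *.
    split.
    + intro Hf.
      pose proof (bez_spec rp tp Hggp) as Hsp.
      set (bp := fst (bez rp tp)) in *. set (dp := snd (bez rp tp)) in *.
      rewrite (fq_any _ _ _ _ _ _ _ bp dp hn hC Hp Hsp) in Hf.
      rewrite (fq_any _ _ _ _ _ _ _ bq dq hn hC Hq Hsq) in Hf.
      set (Bp := Bc (n * alp) bep gap rp tp bp dp) in *.
      set (Bq := Bc (n * alq) beq gaq rq tq bq dq) in *.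
      set (Gp := F (n * alp) bep gap bp dp).
      set (Gq := F (n * alq) beq gaq bq dq).
      pose proof (Z.div_mod Bp _ HM) as H1. pose proof (Z.div_mod Bq _ HM) as H2.
      set (k := Bq / (2 * n * C) - Bp / (2 * n * C)).
      assert (HBq : Bq = Bp + 2 * n * C * k) by (unfold k; lia).
      pose proof (disc (n * alp) bep gap rp tp bp dp) as Hdp.
      pose proof (disc (n * alq) beq gaq rq tq bq dq) as Hdq.
      change (F (n * alp) bep gap rp tp) with (Qval n alp bep gap rp tp) in Hdp.
      change (F (n * alq) beq gaq rq tq) with (Qval n alq beq gaq rq tq) in Hdq.
      rewrite HQp, Hsp in Hdp. rewrite HQq, Hsq in Hdq. fold Bp Gp in Hdp. fold Bq Gq in Hdq.
      assert (HGq : Gq = Gp + k * Bp + n * C * k ^ 2).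
      { apply (Z.mul_reg_l _ _ (4 * n * C)); [nia|].
        rewrite HBq in Hdq. nia. }
      exists (rp * dq - (rp * k + bp) * tq), (- rp * bq + (rp * k + bp) * rq),
             (tp * dq - (tp * k + dp) * tq), (- tp * bq + (tp * k + dp) * rq).
      split; [split|].
      * transitivity ((rp * dp - bp * tp) * (rq * dq - bq * tq)); [ring|].
        rewrite Hsp, Hsq; ring.
      * apply Z.divide_sub_r; [apply Z.divide_mul_l; exact Htp|].
        apply Z.divide_mul_r; exact Htq.
      * simpl. split; [|split].
        -- intros x y.
           change (Qval n alq beq gaq x y) with (F (n * alq) beq gaq x y).
           rewrite (inv _ _ _ rq tq bq dq x y Hsq).
           change (F (n * alq) beq gaq rq tq) with (Qval n alq beq gaq rq tq).
           rewrite HQq. fold Bq Gq. rewrite HBq, HGq.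
           change (Qval n alp bep gap ?X ?Y) with (F (n * alp) bep gap X Y).
           set (X := dq * x - bq * y). set (Y := - tq * x + rq * y).
           transitivity (F (F (n * alp) bep gap rp tp) Bp Gp (X + k * Y) Y).
           { change (F (n * alp) bep gap rp tp) with (Qval n alp bep gap rp tp).
             rewrite HQp. unfold F. ring. }
           unfold Bp, Gp. rewrite <- compose. f_equal; unfold X, Y; ring.
        -- transitivity (rq * (rp * dp - bp * tp)); [rewrite Hsp; ring | ring].
        -- transitivity (tq * (rp * dp - bp * tp)); [rewrite Hsp; ring | ring].
    + intros (a & b & c & d & (Hdet & Hc) & Hpoly & Hr & Ht).
      assert (Hr' : a * rq + b * tq = rp).
      { rewrite Hr, Ht. transitivity (rp * (a * d - b * c)); [ring|]. rewrite Hdet; ring. }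
      assert (Ht' : c * rq + d * tq = tp).
      { rewrite Hr, Ht. transitivity (tp * (a * d - b * c)); [ring|]. rewrite Hdet; ring. }
      assert (Hv : rp * (c * bq + d * dq) - (a * bq + b * dq) * tp = 1).
      { rewrite <- Hr', <- Ht'. transitivity ((a * d - b * c) * (rq * dq - bq * tq)); [ring|].
        rewrite Hdet, Hsq; ring. }
      rewrite (fq_any _ _ _ _ _ _ _ bq dq hn hC Hq Hsq).
      rewrite (fq_any _ _ _ _ _ _ _ _ _ hn hC Hp Hv).
      f_equal. unfold Bc.
      change (F (n * alq) beq gaq ?X ?Y) with (Qval n alq beq gaq X Y).
      change (F (n * alp) bep gap ?X ?Y) with (Qval n alp bep gap X Y).
      rewrite !Hpoly.
      replace (a * (rq + bq) + b * (tq + dq)) with (rp + (a * bq + b * dq)) by (rewrite <- Hr'; ring).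
      replace (c * (rq + bq) + d * (tq + dq)) with (tp + (c * bq + d * dq)) by (rewrite <- Ht'; ring).
      rewrite Hr', Ht'. reflexivity.
Qed.
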